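(* Let $1\le t\le n$. The Alexander dual $I_t(L_n)^\vee$ has minimal monomial generating set $\{x_F: F\in C_{n,t}\}$. Writing $n=(t+1)p+q$ with $0\le q\le t$, the largest degree of a minimal generator of $I_t(L_n)^\vee$ equals $2p$ if $q<t$ and $2p+1$ if $q=t$.
   Context: $K$ is a field, $S=K[x_1,\ldots,x_n]$, $I_t(L_n)=(u_1,\ldots,u_{n-t+1})$ with $u_i=x_ix_{i+1}\cdots x_{i+t-1}$, $x_F=\prod_{i\in F}x_i$. The Alexander dual of a squarefree monomial ideal with minimal generators $x_{G_1},\ldots,x_{G_m}$ is generated by all $x_C$ where $C\subseteq[n]$ meets every $G_j$. $C_{n,t}$ is the set of subsets $\{i_1<\cdots<i_r\}\subseteq[n]$ with: (1) $1\le i_1\le t$; (2) $i_2>t$; (3) $1\le i_{j+1}-i_j\le t$ for $1\le j\le r-1$; (4) $i_{j+2}-i_j>t$ for $1\le j\le r-2$; (5) $i_{r-1}<n-t+1$; (6) $n-t+1\le i_r\le n$ (conditions referring to nonexistent indices are vacuous). *)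

(* Defs.v *)
(* A monomial x_1^{a_1}...x_n^{a_n} is encoded by its exponent vector
   a : {ffun 'I_n -> nat}; the ordinal i : 'I_n stands for the variable x_{i+1}.
   A monomial ideal is described by a (possibly infinite) set of monomial
   generators; a monomial lies in it iff it is divisible by some generator. *)
From mathcomp Require Import all_boot.
Set Implicit Arguments. Unset Strict Implicit. Unset Printing Implicit Defensive.

Definition monomial (n : nat) := {ffun 'I_n -> nat}.

Definition mdvd n (a b : monomial n) : bool := [forall i, a i <= b i].

Definition mdeg n (a : monomial n) : nat := \sum_(i < n) a i.

Definition xF n (F : {set 'I_n}) : monomial n := [ffun i => nat_of_bool (i \in F)].

Definition in_mideal n (gens : monomial n -> Prop) (m : monomial n) : Prop :=
  exists2 g, gens g & mdvd g m.

(* m is a minimal monomial generator of the monomial ideal generated by gens: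
   m is in the ideal and no other monomial of the ideal divides m.
   (The minimal monomial generating set of a monomial ideal is exactly the set
   of such m.) *)
Definition min_mgen n (gens : monomial n -> Prop) (m : monomial n) : Prop :=
  in_mideal gens m /\
  forall m', in_mideal gens m' -> mdvd m' m -> m' = m.

(* Alexander dual of the squarefree monomial ideal minimally generated by the
   x_G, G in Gs: generated by all x_C with C meeting every G. *)
Definition alex_dual_gens n (Gs : {set {set 'I_n}}) (m : monomial n) : Prop :=
  exists2 C : {set 'I_n}, (forall G, G \in Gs -> C :&: G != set0) & m = xF C.

(* support of u_i = x_i x_{i+1} ... x_{i+t-1}, for 1 <= i <= n-t+1;
   here k = i-1 ranges over 0 <= k < n-t+1 (0-based ordinals k..k+t-1). *)
Definition path_supp n t (k : nat) : {set 'I_n} :=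
  [set j : 'I_n | (k <= j) && (j < k + t)].

Definition It_Ln_supps n t : {set {set 'I_n}} :=
  [set path_supp n t (nat_of_ord k) | k : 'I_(n - t + 1)].

Definition elts1 n (F : {set 'I_n}) : seq nat :=
  sort leq [seq (nat_of_ord i).+1 | i <- enum F].

(* F in C_{n,t}; with s = [i_1; ...; i_r], s`_k = i_{k+1}.  r >= 1 is required
   (condition (6) refers to i_r). *)
Definition in_Cnt n t (F : {set 'I_n}) : Prop :=
  let s := elts1 F in
  let r := size s in
  [/\ 0 < r,
   [/\ 
      (1 <= nth 0 s 0 <= t) &                                          (* (1) *)
      (1 < r -> t < nth 0 s 1)],                                         (* (2) *)
      (forall k, k.+1 < r -> 1 <= nth 0 s k.+1 - nth 0 s k <= t),     (* (3) *)
      (forall k, k.+2 < r -> t < nth 0 s k.+2 - nth 0 s k) &         (* (4) *)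
      [/\ (1 < r -> nth 0 s (r - 2) < n - t + 1)                         (* (5) *)
    & (n - t + 1 <= nth 0 s (r - 1) <= n)]].                              (* (6) *)
Arguments in_Cnt : clear implicits.

(* Main.v *)
From mathcomp Require Import zify.
Require Import Defs.
From mathcomp Require Import all_boot.
Set Implicit Arguments. Unset Strict Implicit. Unset Printing Implicit Defensive.

Definition covS n t (s : seq nat) := forall k, k < n - t + 1 -> exists2 x, x \in s & k < x <= k + t.
Definition critS n t (s : seq nat) x := exists k, [&& k < n - t + 1, k < x <= k + t &
   all (fun y => (k < y <= k + t) ==> (y == x)) s].
Definition CntS n t (s : seq nat) : Prop :=
  let r := size s in
  [/\ 0 < r,
   [/\ 
      (1 <= nth 0 s 0 <= t) &
      (1 < r -> t < nth 0 s 1)],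
      (forall k, k.+1 < r -> 1 <= nth 0 s k.+1 - nth 0 s k <= t),
      (forall k, k.+2 < r -> t < nth 0 s k.+2 - nth 0 s k) &
      [/\ (1 < r -> nth 0 s (r - 2) < n - t + 1)
    & (n - t + 1 <= nth 0 s (r - 1) <= n)]].

Lemma CntS_in n t F : in_Cnt n t F <-> CntS n t (elts1 F).
Proof. by []. Qed.

Section Idx.
Lemma lt_nth (s : seq nat) i j : sorted ltn s -> i < j -> j < size s -> nth 0 s i < nth 0 s j.
Proof.
move=> ss ij js; apply: (sorted_ltn_nth ltn_trans 0 ss) => //; rewrite inE; lia.
Qed.
Lemma le_nth (s : seq nat) i j : sorted ltn s -> i <= j -> j < size s -> nth 0 s i <= nth 0 s j.
Proof.
move=> ss; rewrite leq_eqVlt => /orP [/eqP -> //|ij] js.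
by apply: ltnW; apply: lt_nth.
Qed.
Lemma nth_inv (s : seq nat) i j : sorted ltn s -> i < size s -> nth 0 s i < nth 0 s j -> i < j.
Proof.
move=> ss iS h; rewrite ltnNge; apply/negP => ji.
have := le_nth ss ji iS; lia.
Qed.
Lemma memS (s : seq nat) x : x \in s -> exists2 i, i < size s & x = nth 0 s i.
Proof. by move/(nthP 0) => [i ? <-]; exists i. Qed.

End Idx.

Lemma crit_out t k x (s : seq nat) y : all (fun y => (k < y <= k + t) ==> (y == x)) s ->
  y \in s -> y != x -> (y <= k) || (k + t < y).
Proof.
move/allP => h /h hy yx; rewrite -(negbK (_ || _)) negb_or; apply/negP => /andP [h1 h2].
have : k < y <= k + t by lia.
by move=> hh; move: hy; rewrite hh /= (negbTE yx).
Qed.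

Lemma rng_nth n (s : seq nat) i : all (fun x => 0 < x <= n) s -> i < size s -> 0 < nth 0 s i <= n.
Proof. by move/allP => h iS; apply: h; apply: mem_nth. Qed.

Lemma cov_char n t (s : seq nat) : 1 <= t -> t <= n -> sorted ltn s -> all (fun x => 0 < x <= n) s ->
  covS n t s <-> [/\ 0 < size s, nth 0 s 0 <= t,
     (forall k, k.+1 < size s -> nth 0 s k.+1 - nth 0 s k <= t) &
     n - t + 1 <= nth 0 s (size s - 1)].
Proof.
move=> t1 tn ss rs; split.
- move=> cv.
  have [x xs hx] := cv 0 ltac:(lia).
  have r0 : 0 < size s by case: (s) xs.
  split => //.
  + have [i iS xi] := memS xs; subst x; have := le_nth ss (leq0n i) iS; lia.
  + move=> k kS; rewrite leqNgt; apply/negP => gap.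
    have := rng_nth rs kS => /= hk1.
    have [y ys hy] := cv (nth 0 s k) ltac:(lia).
    have [i iS yi] := memS ys; subst y.
    have h1 := nth_inv ss (ltnW kS) (proj1 (andP hy)).
    have h2 : nth 0 s i < nth 0 s k.+1 by lia.
    have := nth_inv ss iS h2; lia.
  + have [y ys hy] := cv (n - t) ltac:(lia).
    have [i iS yi] := memS ys; subst y.
    have := le_nth ss (_ : i <= size s - 1) (_ : size s - 1 < size s); lia.
- case=> r0 h0 hg hl k kn.
  case hh: (has (fun x => k < x) s); last first.
    have := hasPn (negbT hh) (nth 0 s (size s - 1)) (mem_nth 0 (_ : size s - 1 < size s)).
    move=> /(_ ltac:(lia)) /=; lia.
  have fi : find (fun x => k < x) s < size s by rewrite -has_find.
  have := nth_find 0 hh => /= hf.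
  exists (nth 0 s (find (fun x => k < x) s)); first by apply: mem_nth.
  move: fi hf; case E: (find _ _) => [|i] fi hf.
    lia.
  have := before_find 0 (_ : i < find (fun x => k < x) s); rewrite E => /(_ (ltnSn i)) /= hb.
  have := hg i fi; lia.
Qed.

Lemma seq_char n t (s : seq nat) : 1 <= t -> t <= n -> sorted ltn s -> all (fun x => 0 < x <= n) s ->
  (covS n t s /\ forall x, x \in s -> critS n t s x) <-> CntS n t s.
Proof.
move=> t1 tn ss rs; rewrite (cov_char t1 tn ss rs); split.
- case=> -[r0 h0 hg hl] cr.
  have hs : forall j, j < size s -> 0 < nth 0 s j <= n by move=> j; apply: rng_nth.
  have cri : forall j, j < size s -> exists k, [/\ k < n - t + 1, k < nth 0 s j <= k + t &
     forall i, i < size s -> i != j -> (nth 0 s i <= k) || (k + t < nth 0 s i)].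
    move=> j jS; have [k /and3P [k1 k2 k3]] := cr _ (mem_nth 0 jS).
    exists k; split => // i iS ij; apply: (crit_out k3); first exact: mem_nth.
    apply/negP => /eqP e.
    case: (ltngtP i j) ij => // ij _.
      by have := lt_nth ss ij jS; rewrite e ltnn.
    by have := lt_nth ss ij iS; rewrite e ltnn.
  split => //.
  + split; first by have := hs 0 r0; lia.
    move=> r1; have [k [k1 k2 k3]] := cri 0 r0.
    have := k3 1 r1 isT; have := lt_nth ss (ltnSn 0) r1; lia.
  + move=> k kS; have := lt_nth ss (ltnSn k) kS; have := hg k kS; lia.
  + move=> k kS; have [K [k1 k2 k3]] := cri k.+1 (ltnW kS).
    have := k3 k ltac:(lia) ltac:(lia).
    have := k3 k.+2 kS ltac:(lia).
    have := lt_nth ss (ltnSn k) (ltnW kS).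
    have := lt_nth ss (ltnSn k.+1) kS.
    lia.
  + split; last by have := hs (size s - 1) ltac:(lia); lia.
    move=> r1; have [K [k1 k2 k3]] := cri (size s - 1) ltac:(lia).
    have := k3 (size s - 2) ltac:(lia) ltac:(apply/eqP; lia).
    have := @lt_nth s (size s - 2) (size s - 1) ss ltac:(lia) ltac:(lia).
    lia.
- case=> r0 [h0 h1] hg h4 [h5 h6].
  have hs : forall j, j < size s -> 0 < nth 0 s j <= n by move=> j; apply: rng_nth.
  split.
    by split => //; [lia | move=> k kS; have := hg k kS; lia | lia].
  move=> x xs; have [j jS xj] := memS xs; subst x.
  set pr := (if j is j'.+1 then nth 0 s j' else 0).
  exists (maxn pr (nth 0 s j - t)).
  have hpr : 0 < j -> pr < nth 0 s j.
    by rewrite /pr; case: (j) jS => [|j'] // jS' _; have := hg j' jS'; lia.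
  have hj := hs j jS.
  have hpn : pr < n - t + 1.
    rewrite /pr; case: (j) jS => [|j'] jS'; first lia.
    case: (ltnP j'.+2 (size s)) => jj.
      by have := h4 j' jj; have := hs _ jj; lia.
    have -> : j' = size s - 2 by lia.
    by apply: h5; lia.
  apply/and3P; split.
  - lia.
  - clear xs; case: j jS @pr hpr hj hpn => [|j'] jS pr hpr hj hpn; lia.
  - apply/allP => y ys; have [i iS yi] := memS ys; subst y.
    apply/implyP => hy; apply/eqP.
    case: (ltngtP i j) => // ij.
    + have : nth 0 s i <= pr.
        rewrite /pr; case E: j ij jS hy => [|j'] // ij jS' _.
        by apply: le_nth => //; lia.
      lia.
    + have : pr + t < nth 0 s j.+1.
        rewrite /pr; case: (j) ij iS => [|j'] ij iS.
          by apply: h1; lia.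
        by have := h4 j' ltac:(lia); lia.
      have := le_nth ss ij iS.
      have := lt_nth ss (ltnSn j) (leq_ltn_trans ij iS).
      lia.
by rewrite ij. Qed.

Lemma par k : exists i, k = 2 * i \/ k = (2 * i).+1.
Proof.
exists k./2; have := odd_double_half k; rewrite -mul2n; case: (odd k) => /=; lia.
Qed.

Lemma step n t (s : seq nat) : CntS n t s -> forall i j, j + 2 * i < size s ->
  nth 0 s j + i * t.+1 <= nth 0 s (j + 2 * i).
Proof.
case=> _ _ _ h4 _; elim=> [|i IH] j h; first by rewrite muln0 !addn0.
have := IH j ltac:(lia).
have e : j + 2 * i.+1 = (j + 2 * i).+2 by lia.
rewrite e in h *; have := h4 _ h; lia.
Qed.

Lemma mle a b c t : a * t.+1 <= b * t.+1 + c -> c < t.+1 -> a <= b.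
Proof.
move=> h hc; rewrite leqNgt; apply/negP => ba.
have := leq_mul (ba : b.+1 <= a) (leqnn t.+1); rewrite mulSn; lia.
Qed.

Definition Dv n t := if n %% t.+1 < t then 2 * (n %/ t.+1) else (2 * (n %/ t.+1)).+1.

Lemma bound n t (s : seq nat) : 1 <= t -> t <= n -> CntS n t s -> size s <= Dv n t.
Proof.
move=> t1 tn C; have st := step C.
case: C => r0 [h0 h1] hg h4 [h5 h6].
rewrite /Dv.
have := divn_eq n t.+1; have := ltn_pmod n (ltn0Sn t).
move: (n %/ t.+1) (n %% t.+1) => p q hq hn.
case: (ltnP 1 (size s)) => r1; last first.
  case: ifP => qt; last lia. case: (p) hn => [|p'] hn; lia.
have a1 := h1 r1.
have [i [ei|ei]] := par (size s - 2).
- have := st i 1 ltac:(lia).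
  have -> : 1 + 2 * i = size s - 1 by lia.
  move=> hh; have := @mle i.+1 p q t ltac:(rewrite mulSn; lia) hq.
  case: ifP => qt; lia.
- have := st i 1 ltac:(lia).
  have -> : 1 + 2 * i = size s - 2 by lia.
  move=> hh; have := h5 r1; case: ifP => qt h5'.
    by have := @mle i.+2 p q.+1 t ltac:(rewrite !mulSn; lia) ltac:(lia); lia.
  by have := @mle i.+1 p q t ltac:(rewrite !mulSn; lia) hq; lia.
Qed.

Definition fseq t j := (j.+1 %/ 2) * t.+1 + (1 - j %% 2).

Lemma fseqE t i : fseq t (2 * i) = i * t.+1 + 1 /\ fseq t (2 * i).+1 = i.+1 * t.+1.
Proof.
rewrite /fseq; have -> : (2 * i).+1 %/ 2 = i by lia.
have -> : (2 * i).+2 %/ 2 = i.+1 by lia.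
have -> : (2 * i) %% 2 = 0 by lia.
have -> : (2 * i).+1 %% 2 = 1 by lia.
by rewrite subn0 subnn addn0.
Qed.

Lemma fseqS t j : 0 < t -> fseq t j < fseq t j.+1 /\ fseq t j.+1 - fseq t j <= t /\ fseq t j.+2 = fseq t j + t.+1.
Proof.
move=> t0; have [i [->|->]] := par j.
- have [e1 e2] := fseqE t i; have [e3 e4] := fseqE t i.+1.
  have -> : (2 * i).+2 = 2 * i.+1 by lia.
  rewrite e1 e2 e3 mulSn; lia.
- have [e1 e2] := fseqE t i; have [e3 e4] := fseqE t i.+1.
  have -> : (2 * i).+2 = 2 * i.+1 by lia.
  rewrite e2 e3 e4 (mulSn i.+1); lia.
Qed.

Lemma ex_seq n t : 1 <= t -> t <= n ->
  let s := mkseq (fseq t) (Dv n t) in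
  [/\ sorted ltn s, all (fun x => 0 < x <= n) s, CntS n t s & size s = Dv n t].
Proof.
move=> t1 tn s.
have ss : sorted ltn s.
  rewrite /s /mkseq sorted_map; apply: (sub_sorted _ (iota_ltn_sorted 0 _)).
  move=> i j /=; apply: (homo_ltn ltn_trans) => k; exact: (proj1 (fseqS k t1)).
have sz : size s = Dv n t by rewrite size_mkseq.
have nE : forall j, j < Dv n t -> nth 0 s j = fseq t j by move=> j jD; rewrite nth_mkseq.
have := divn_eq n t.+1; have := ltn_pmod n (ltn0Sn t).
rewrite /Dv in nE sz *.
move: (n %/ t.+1) (n %% t.+1) nE sz => p q nE sz hq hn.
have p0 : q < t -> 0 < p by case: (p) hn => [|p'] hn; lia.
have D0 : 0 < (if q < t then 2 * p else (2 * p).+1).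
  by case: ifP => h //; have := p0 h; lia.
have C : CntS n t s.
  split.
  - by rewrite sz.
  - split.
      by rewrite nE //; rewrite /fseq; lia.
    rewrite sz => r1; rewrite nE //; have [_ e] := fseqE t 0; move: e; rewrite muln0 => ->; lia.
  - rewrite sz => k kS; rewrite !nE; [|lia|lia]; have := fseqS k t1; lia.
  - rewrite sz => k kS; rewrite !nE; [|lia|lia]; have := fseqS k t1; lia.
  - rewrite sz; split.
    + move=> r1; rewrite nE; last by lia.
      case: ifP => qt.
        have [p' ep] : exists p', p = p'.+1 by case: (p) (p0 qt) => [|p'] //; exists p'.
        subst p; have -> : 2 * p'.+1 - 2 = 2 * p' by lia.
        have [e _] := fseqE t p'; rewrite e; rewrite mulSn in hn; lia.
      have -> : (2 * p).+1 - 2 = (2 * (p - 1)).+1 by case: ifP r1 => //; lia.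
      have [_ e] := fseqE t (p - 1); rewrite e.
      have -> : (p - 1).+1 = p by case: ifP r1 => //; lia.
      lia.
    + rewrite nE; last by lia.
      case: ifP => qt.
        have [p' ep] : exists p', p = p'.+1 by case: (p) (p0 qt) => [|p'] //; exists p'.
        subst p; have -> : 2 * p'.+1 - 1 = (2 * p').+1 by lia.
        have [_ e] := fseqE t p'; rewrite e; lia.
      have -> : (2 * p).+1 - 1 = 2 * p by lia.
      have [e _] := fseqE t p; rewrite e; lia.
split => //.
apply/allP => x /memS [j jS ->].
case: C => r0 [h0 _] _ _ [_ h6].
have := le_nth ss (leq0n j) jS; have := @le_nth s j (size s - 1) ss ltac:(lia) ltac:(lia).
lia.
Qed.

Lemma mem_elts1 n (F : {set 'I_n}) (i : 'I_n) : (i.+1 \in elts1 F) = (i \in F).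
Proof.
rewrite /elts1 mem_sort; apply/mapP/idP.
  by move=> [j]; rewrite mem_enum => jF [/val_inj ->].
by move=> iF; exists i; rewrite ?mem_enum.
Qed.

Lemma elts1_inv n (F : {set 'I_n}) x : x \in elts1 F -> exists2 i : 'I_n, i \in F & x = i.+1.
Proof. by rewrite /elts1 mem_sort => /mapP [i]; rewrite mem_enum => iF ->; exists i. Qed.

Lemma elts1_sorted n (F : {set 'I_n}) : sorted ltn (elts1 F).
Proof.
rewrite ltn_sorted_uniq_leq /elts1 sort_uniq sort_sorted ?andbT; last exact: leq_total.
by rewrite map_inj_uniq ?enum_uniq // => a b /succn_inj /val_inj.
Qed.

Lemma elts1_rng n (F : {set 'I_n}) : all (fun x => 0 < x <= n) (elts1 F).
Proof. by apply/allP => x /elts1_inv [i _ ->]; rewrite /= ltn_ord. Qed.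

Lemma elts1_size n (F : {set 'I_n}) : size (elts1 F) = #|F|.
Proof. by rewrite /elts1 size_sort size_map -cardE. Qed.

Lemma elts1_of n (s : seq nat) : sorted ltn s -> all (fun x => 0 < x <= n) s ->
  elts1 [set i : 'I_n | i.+1 \in s] = s.
Proof.
move=> ss rs; rewrite /elts1.
have hs : sort leq s = s.
  apply: sorted_sort; first exact: leq_trans.
  by move: ss; rewrite ltn_sorted_uniq_leq => /andP [].
rewrite -[RHS]hs.
apply/perm_sortP; [exact: leq_total | exact: leq_trans | exact: anti_leq |].
apply: uniq_perm.
- by rewrite map_inj_uniq ?enum_uniq // => a b /succn_inj /val_inj.
- exact: (sorted_uniq ltn_trans ltnn ss).
move=> x; apply/mapP/idP.
  by move=> [i]; rewrite mem_enum inE => ? ->.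
move=> xs; have /andP [x0 xn] := allP rs x xs.
have xl : x.-1 < n by lia.
exists (Ordinal xl); first by rewrite mem_enum inE /= prednK.
by rewrite /= prednK.
Qed.

Lemma mdvd_xF n (A B : {set 'I_n}) : mdvd (xF A) (xF B) = (A \subset B).
Proof.
apply/forallP/subsetP => [h i iA | h i]; first by have := h i; rewrite !ffunE iA; case: (i \in B).
by rewrite !ffunE; case iA: (i \in A) => //=; rewrite (h _ iA).
Qed.

Lemma xF_inj n (A B : {set 'I_n}) : xF A = xF B -> A = B.
Proof.
move=> h; apply/setP => i; have := congr1 (fun f : monomial n => f i) h.
by rewrite /= !ffunE; case: (i \in A); case: (i \in B).
Qed.

Lemma mdvd_refl n (a : monomial n) : mdvd a a.
Proof. by apply/forallP. Qed.

Lemma mdvd_trans n (a b c : monomial n) : mdvd a b -> mdvd b c -> mdvd a c.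
Proof. by move=> /forallP h1 /forallP h2; apply/forallP => i; apply: leq_trans (h1 i) (h2 i). Qed.

Lemma mdvd_anti n (a b : monomial n) : mdvd a b -> mdvd b a -> a = b.
Proof.
move=> /forallP h1 /forallP h2; apply/ffunP => i; apply/eqP; rewrite eqn_leq h1 h2.
by [].
Qed.

Lemma mdeg_xF n (F : {set 'I_n}) : mdeg (xF F) = #|F|.
Proof.
rewrite /mdeg -sum1_card [RHS]big_mkcond /=; apply: eq_bigr => i _.
by rewrite ffunE; case: (i \in F).
Qed.

Definition coverset n t (C : {set 'I_n}) := forall G, G \in It_Ln_supps n t -> C :&: G != set0.

Lemma cover_char n t (C : {set 'I_n}) : coverset t C <-> covS n t (elts1 C).
Proof.
split.
- move=> cv k kn.
  have := cv (path_supp n t (Ordinal kn)) (imset_f _ _).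
  move=> /(_ isT) /set0Pn [j]; rewrite !inE /= => /andP [jC /andP [j1 j2]].
  by exists j.+1; [rewrite mem_elts1 | apply/andP; split; lia].
- move=> cv G /imsetP [k _ ->]; apply/set0Pn.
  have [x xs /andP [x1 x2]] := cv k (ltn_ord k).
  have [i iC xi] := elts1_inv xs; subst x.
  by exists i; rewrite !inE iC /=; apply/andP; split; lia.
Qed.

Lemma alex_char n t (m : monomial n) :
  min_mgen (alex_dual_gens (It_Ln_supps n t)) m <->
  exists2 F, (coverset t F /\ forall C, coverset t C -> C \subset F -> C = F) & m = xF F.
Proof.
split.
- move=> [[g [C cC ->] dv] mn].
  have e := mn (xF C) (ex_intro2 _ _ (xF C) (ex_intro2 _ _ C cC erefl) (mdvd_refl _)) dv.
  exists C => //; split => // C' cC' sub.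
  apply: xF_inj; rewrite e; apply: mn.
    by exists (xF C'); [exists C' | apply: mdvd_refl].
  by rewrite -e mdvd_xF.
- move=> [F [cF mF] ->]; split.
    by exists (xF F); [exists F | apply: mdvd_refl].
  move=> m' [g [C cC ->] dv] dv'.
  have e : C = F by apply: mF => //; rewrite -mdvd_xF; apply: mdvd_trans dv dv'.
  by subst C; apply: mdvd_anti.
Qed.

From Stdlib Require Import Classical.

Lemma min_char n t (F : {set 'I_n}) :
  (coverset t F /\ forall C, coverset t C -> C \subset F -> C = F) <->
  (covS n t (elts1 F) /\ forall x, x \in elts1 F -> critS n t (elts1 F) x).
Proof.
split.
- move=> [cF mF]; split; first by apply/cover_char.
  move=> x xs; have [i iF xi] := elts1_inv xs; subst x.
  case: (classic (critS n t (elts1 F) i.+1)) => // nc.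
  have : coverset t (F :\ i).
    move=> G /imsetP [k _ ->]; apply/set0Pn.
    have := cF (path_supp n t k) (imset_f _ _).
    move=> /(_ isT) /set0Pn [j]; rewrite !inE /= => /andP [jF jk].
    case: (eqVneq j i) => [ji | ji]; last by exists j; rewrite !inE ji jF jk.
    subst j; move: jk => /andP [k1 k2].
    have : ~~ all (fun y => (k < y <= k + t) ==> (y == i.+1)) (elts1 F).
      apply/negP => hall; apply: nc; exists k; rewrite hall ltn_ord andbT; apply/andP; split; lia.
    move=> /allPn [y ys]; rewrite negb_imply => /andP [/andP [y1 y2] yi].
    have [j jF2 yj] := elts1_inv ys; subst y.
    exists j; rewrite !inE jF2 andbT; apply/andP; split.
      by apply: contraNneq yi => ->.
    apply/andP; split; lia.
  move=> cD; have := mF _ cD (subsetDl _ _) => /setP /(_ i).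
  by rewrite !inE eqxx iF.
- move=> [cF cr]; split; first by apply/cover_char.
  move=> C cC sub; apply/eqP; rewrite eqEsubset sub /=.
  apply/subsetP => i iF.
  have iF1 : i.+1 \in elts1 F by rewrite mem_elts1.
  have [k /and3P [k1 k2 k3]] := cr _ iF1.
  have := cC (path_supp n t (Ordinal k1)) (imset_f _ _).
  move=> /(_ isT) /set0Pn [j]; rewrite !inE /= => /andP [jC /andP [j1 j2]].
  have jF := subsetP sub _ jC.
  have := allP k3 j.+1; rewrite mem_elts1 jF => /(_ isT).
  rewrite /= (_ : k < j.+1 <= k + t) //=; last by apply/andP; split; lia.
  by move=> /eqP [/val_inj <-].
Qed.

Theorem corollary2p9 (n t : nat) (ht1 : 1 <= t) (htn : t <= n) :
  (forall m : monomial n,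
     min_mgen (alex_dual_gens (It_Ln_supps n t)) m <->
     exists2 F : {set 'I_n}, in_Cnt n t F & m = xF F) /\
  (let p := n %/ t.+1 in
   let q := n %% t.+1 in
   let D := if q < t then 2 * p else (2 * p).+1 in
   (exists2 m : monomial n,
      min_mgen (alex_dual_gens (It_Ln_supps n t)) m & mdeg m = D) /\
   (forall m : monomial n,
      min_mgen (alex_dual_gens (It_Ln_supps n t)) m -> mdeg m <= D)).
Proof.
have P1 : forall m : monomial n,
     min_mgen (alex_dual_gens (It_Ln_supps n t)) m <->
     exists2 F : {set 'I_n}, in_Cnt n t F & m = xF F.
  move=> m; rewrite alex_char; split.
  - move=> [F mc ->]; exists F => //; apply/CntS_in.
    apply/(seq_char ht1 htn (elts1_sorted F) (elts1_rng F)); exact/min_char.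
  - move=> [F c ->]; exists F => //; apply/min_char.
    by apply/(seq_char ht1 htn (elts1_sorted F) (elts1_rng F)); apply/CntS_in.
split => //.
move=> p q D; split.
- have [ss rs C sz] := ex_seq ht1 htn.
  set s := mkseq (fseq t) (Dv n t) in ss rs C sz.
  have E := elts1_of ss rs.
  exists (xF [set i : 'I_n | i.+1 \in s]).
    by apply/P1; exists [set i : 'I_n | i.+1 \in s] => //; apply/CntS_in; rewrite E.
  by rewrite mdeg_xF -elts1_size E sz.
- move=> m /P1 [F c ->]; rewrite mdeg_xF -elts1_size.
  by have := bound ht1 htn (iffLR (CntS_in _ _) c).
Qed.
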